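(* Let $G$ be a connected simple graph without bridges whose edge set is identified with $[d+1]$, let $B_1,\dots,B_n$ be the bases (spanning trees) of its graphic matroid, all of cardinality $k$, and let $P=\operatorname{tconv}\{-e_{B_1},\dots,-e_{B_n}\}\subseteq\mathbb{T}^d$ with $V=(-e_{B_1},\dots,-e_{B_n})$. Then the set of coarse types of the maximal cells of the tropical complex $\mathcal{C}_V$ is exactly the set of tuples $(t_1,\dots,t_{d+1})$ obtained as follows: choose an integer $d'\in\{0,1,\dots,d-k+1\}$ and pairwise distinct elements $i_1,i_2,\dots,i_{d'+1}\in[d+1]$ such that $[d+1]\setminus\{i_1,\dots,i_{d'}\}$ contains a basis of the matroid, and set $$t_j=\begin{cases} b_{\{i_1\},\emptyset}+b_{\emptyset,\{i_1,i_2,\dots,i_{d'+1}\}} & \text{if } j=i_1,\\ b_{\{i_l\},\{i_1,\dots,i_{l-1}\}} & \text{if } j=i_l \text{ with } 2\le l\le d'+1,\\ 0 & \text{otherwise.}\end{cases}$$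
   Context: Tropical arithmetic is min-plus: $a\oplus b=\min(a,b)$, $a\odot b=a+b$, extended componentwise on $\mathbb{R}^{d+1}$ (with $\lambda\odot x=(\lambda+x_1,\dots,\lambda+x_{d+1})$). The tropical torus is $\mathbb{T}^d=\mathbb{R}^{d+1}/\mathbb{R}(1,\dots,1)$. The tropical convex hull of $v_1,\dots,v_n$ is $\operatorname{tconv}\{v_1,\dots,v_n\}=\{\bigoplus_l \lambda_l\odot v_l:\lambda_l\in\mathbb{R}\}$. For $B\subseteq[d+1]$, $e_B=\sum_{i\in B}e_i$ where $e_i$ are the unit vectors of $\mathbb{R}^{d+1}$. For $m\in[d+1]$ let $\bar S_m=\{\xi\in\mathbb{T}^d:\xi_m=\min_i\xi_i\}$. For $V=(v_1,\dots,v_n)$ and $x\in\mathbb{T}^d$, the (fine) type is $\operatorname{type}_V(x)=(T_1,\dots,T_{d+1})$ with $T_m=\{l\in[n]: v_l\in x+\bar S_m\}$. The cells $\{x:\operatorname{type}_V(x)=\mathcal{T}\}$ are relatively open polyhedra, and their closures form a polyhedral subdivision $\mathcal{C}_V$ of $\mathbb{T}^d$, the tropical complex; maximal cells are the inclusion-maximal (full-dimensional) ones. The coarse type of a point is $(|T_1|,\dots,|T_{d+1}|)$, and the coarse type of a cell is the coarse type of its relative interior points. For $I,J\subseteq[d+1]$, $b_{I,J}$ denotes the number of bases $B$ of the matroid with $I\subseteq B$ and $J\cap B=\emptyset$. *)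

(* Defs.v *)
From HB Require Import structures.
From mathcomp Require Import all_boot all_order all_algebra.
From mathcomp Require Import reals.
Set Implicit Arguments. Unset Strict Implicit. Unset Printing Implicit Defensive.
Import Order.TTheory GRing.Theory Num.Theory.
Local Open Scope ring_scope.

Section Graph.
Variables (T : finType) (n : nat) (src tgt : 'I_n -> T).

Definition incident (e : 'I_n) (x y : T) : bool :=
  ((src e == x) && (tgt e == y)) || ((src e == y) && (tgt e == x)).

Definition adjE (B : {set 'I_n}) : rel T :=
  fun x y => [exists e in B, incident e x y].

Definition connected_on (B : {set 'I_n}) : bool :=
  [forall x, forall y, connect (adjE B) x y].

Definition acyclic (B : {set 'I_n}) : bool :=
  [forall e in B, ~~ connect (adjE (B :\ e)) (src e) (tgt e)].

(* bases of the graphic matroid of a connected graph = spanning trees *)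
Definition spanning_tree (B : {set 'I_n}) : bool :=
  connected_on B && acyclic B.

Definition simple_graph : Prop :=
  (forall e, src e != tgt e) /\
  (forall e f, incident e (src f) (tgt f) -> e = f).

Definition graph_connected : Prop := connected_on setT.

Definition bridgeless : Prop := forall e, connected_on (setT :\ e).

Definition bIJ (I J : {set 'I_n}) : nat :=
  #|[set B | spanning_tree B & (I \subset B) && [disjoint J & B]]|.

End Graph.

Section Tropical.
Variables (R : realType) (T : finType) (n : nat) (src tgt : 'I_n -> T).

Definition negeB (B : {set 'I_n}) : 'I_n -> R :=
  fun i => if i \in B then -1 else 0.

(* v ∈ x + S̄_m, i.e. (v - x)_m = min_i (v - x)_i *)
Definition in_sector (v x : 'I_n -> R) (m : 'I_n) : bool :=
  [forall i, v m - x m <= v i - x i].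

(* fine type of x w.r.t. V = (-e_B)_{B basis}; T_m is the set of bases B
   (identifying the index l with B_l) such that -e_B ∈ x + S̄_m *)
Definition ftype (x : 'I_n -> R) : {ffun 'I_n -> {set {set 'I_n}}} :=
  [ffun m => [set B | spanning_tree src tgt B && in_sector (negeB B) x m]].

Definition ctype (x : 'I_n -> R) : {ffun 'I_n -> nat} :=
  [ffun m => #|ftype x m|].

(* x lies in (the relative interior of) a maximal, i.e. full-dimensional,
   cell: a whole neighbourhood of x has the same fine type *)
Definition in_maximal_cell (x : 'I_n -> R) : Prop :=
  exists2 eps : R, 0 < eps &
    forall y : 'I_n -> R, (forall i, `|y i - x i| < eps) -> ftype y = ftype x.

End Tropical.

(* the tuple t built from the sequence s = [:: i_1; ...; i_{d'+1}] *)
Definition coarse_formula (T : finType) (n : nat) (src tgt : 'I_n -> T)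
  (s : seq 'I_n) : {ffun 'I_n -> nat} :=
  [ffun j =>
     if s is i1 :: _ then
       if j == i1 then bIJ src tgt [set i1] set0 + bIJ src tgt set0 [set x in s]
       else if j \in s then bIJ src tgt [set j] [set x in take (index j s) s]
       else 0%N
     else 0%N].

(* Main.v *)
Require Import Defs.
From HB Require Import structures.
From mathcomp Require Import all_boot all_order all_algebra.
From mathcomp Require Import reals.
From mathcomp Require Import lra zify.
Import Order.TTheory GRing.Theory Num.Theory.

Lemma exists_tree (T : finType) (n : nat) (src tgt : 'I_n -> T) :
  graph_connected src tgt -> exists B, spanning_tree src tgt B.
Proof.
move=> Hc.
have [B HB _] := @minset_exists _ (fun B => connected_on src tgt B) setT Hc.
exists B; move/minsetP: HB => [HcB Hmin].
apply/andP; split => //.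
apply/forallP => e; apply/implyP => eB; apply/negP => Hce.
have Hsym : forall C, symmetric (adjE src tgt C).
  move=> C u v; apply/existsP/existsP => [] [f /andP [fC Hf]]; exists f;
  rewrite fC /=; move: Hf; rewrite /incident => /orP [] /andP [/eqP -> /eqP ->];
  by rewrite !eqxx ?orbT.
have HcBe : connected_on src tgt (B :\ e).
  apply/forallP => u; apply/forallP => v.
  move/forallP: HcB => /(_ u) /forallP /(_ v).
  apply: connect_sub => a b /existsP [f /andP [fB Hf]].
  case: (eqVneq f e) => [fe|fne].
    subst f; move: Hf; rewrite /incident => /orP [] /andP [/eqP <- /eqP <-] //.
    by rewrite (sym_connect_sym (Hsym _)).
  apply: connect1; rewrite /adjE; apply/existsP; exists f; by rewrite !inE fne fB.
have := Hmin _ HcBe (subD1set B e).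
move=> H; have := properD1 eB; by rewrite H properE subxx.
Qed.

Lemma find_index_eq (T : eqType) (p : pred T) (s : seq T) (j : T) :
  j \in s ->
  (find p s == index j s) = p j && ~~ has p (take (index j s) s).
Proof.
elim: s => [|a s IH] //=.
rewrite inE.
case: (eqVneq j a) => [-> | ne] /=.
  by case: (p a).
move=> js.
case: (p a) => //=.
  by rewrite andbF.
by rewrite eqSS IH.
Qed.

Lemma pairwise_index (T : eqType) (r : rel T) (s : seq T) a b :
  pairwise r s -> a \in s -> b \in s -> (index a s < index b s)%N -> r a b.
Proof.
elim: s => [|c s IH] //= /andP [Hc Hp].
rewrite !inE.
case: (eqVneq c a) => [<-|na].
  case: (eqVneq c b) => [<-|nb] //= _ bs _; by move/allP: Hc; apply.
case: (eqVneq c b) => [<-|nb] //=.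
move=> as_ bs; rewrite ltnS; exact: IH.
Qed.

Local Open Scope ring_scope.

Definition mB {n : nat} (s : seq 'I_n) (i1 : 'I_n) (B : {set 'I_n}) : 'I_n :=
  nth i1 s (find (fun a => a \in B) s).

Lemma argmin_strict (R : realType) n (x : 'I_n -> R) (i1 : 'I_n) rest (dl : R) :
  0 <= dl -> uniq (i1 :: rest) ->
  (forall a b, a \in i1 :: rest -> b \in i1 :: rest ->
     (index a (i1 :: rest) < index b (i1 :: rest))%N -> - x a + dl < - x b) ->
  (forall i, i \notin i1 :: rest -> - x i1 + 1 + dl < - x i) ->
  (forall i, i \in i1 :: rest -> - x i + dl < - x i1 + 1) ->
  forall B i, i != mB (i1 :: rest) i1 B ->
    negeB R B (mB (i1 :: rest) i1 B) - x (mB (i1 :: rest) i1 B) + dl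
      < negeB R B i - x i.
Proof.
set s := i1 :: rest.
move=> dl0 us Hb Hc Hd B i.
have i1s : i1 \in s by rewrite inE eqxx.
have F1 : forall j, j != i1 -> - x i1 + dl < - x j.
  move=> j nj; case js: (j \in s).
    apply: Hb => //; rewrite /s /= eqxx /=.
    by rewrite eq_sym (negbTE nj).
  have := Hc j (negbT js); lra.
rewrite /mB.
set f := find _ s.
have [fs|fs] := ltnP f (size s).
  set m := nth i1 s f.
  have mB_ : m \in B by have := @nth_find _ i1 (fun a => a \in B) s; rewrite has_find; apply.
  have ms : m \in s by exact: mem_nth.
  have Hdm := Hd _ ms.
  rewrite /negeB mB_ => nim.
  case iB: (i \in B).
    case is_: (i \in s).
      have : (f < index i s)%N.
        rewrite ltn_neqAle; apply/andP; split.
          apply/eqP => E; move/eqP: nim; apply; by rewrite /m E nth_index.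
        rewrite leqNgt; apply/negP => H.
        have := before_find i1 H; by rewrite nth_index // iB.
      rewrite -(index_uniq i1 fs us) -/m => H.
      have := Hb _ _ ms is_ H; lra.
    have := Hc _ (negbT is_); lra.
  case: (eqVneq i i1) => [->|ni1]; first lra.
  have := F1 _ ni1; lra.
have ff : f = size s by apply/eqP; rewrite eqn_leq fs find_size.
rewrite ff nth_default // => ni.
have i1B : i1 \notin B.
  apply/negP => H; move: ff; rewrite /f /s /= H //.
rewrite /negeB (negbTE i1B).
have := F1 _ ni.
case iB: (i \in B); last lra.
have := Hc i.
have -> : i \notin s.
  apply/negP => is_; have : has (fun a => a \in B) s by apply/hasP; exists i.
  by rewrite has_find -/f ff ltnn.
move=> /(_ isT); lra.
Qed.

Lemma sector_of_strict (R : realType) n (v x : 'I_n -> R) (m : 'I_n) :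
  (forall i, i != m -> v m - x m < v i - x i) ->
  forall m', in_sector v x m' = (m' == m).
Proof.
move=> H m'; case: (eqVneq m' m) => [->|ne].
  apply/forallP => i; case: (eqVneq i m) => [->//|nim].
  exact: ltW (H _ nim).
apply/negP => /forallP /(_ m) H1; have := H _ ne; lra.
Qed.

Lemma maximal_of_margin (R : realType) (T : finType) n (src tgt : 'I_n -> T)
  (x : 'I_n -> R) (dl : R) (M : {set 'I_n} -> 'I_n) :
  0 < dl ->
  (forall B i, i != M B -> negeB R B (M B) - x (M B) + dl < negeB R B i - x i) ->
  in_maximal_cell src tgt x.
Proof.
move=> dl0 H; exists (dl / 2); first lra.
move=> y Hy; apply/ffunP => m; rewrite !ffunE; apply/setP => B; rewrite !inE.
congr (_ && _).
rewrite (@sector_of_strict _ _ _ x (M B)); last first.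
  move=> i ni; have := H B i ni; lra.
rewrite (@sector_of_strict _ _ _ y (M B)) //.
move=> i ni; have := H B i ni.
have := Hy i; have := Hy (M B); rewrite !ltr_norml => /andP [h1 h2] /andP [h3 h4].
lra.
Qed.

Lemma ftype_char (R : realType) (T : finType) n (src tgt : 'I_n -> T)
  (x : 'I_n -> R) (i1 : 'I_n) rest (dl : R) :
  0 <= dl -> uniq (i1 :: rest) ->
  (forall a b, a \in i1 :: rest -> b \in i1 :: rest ->
     (index a (i1 :: rest) < index b (i1 :: rest))%N -> - x a + dl < - x b) ->
  (forall i, i \notin i1 :: rest -> - x i1 + 1 + dl < - x i) ->
  (forall i, i \in i1 :: rest -> - x i + dl < - x i1 + 1) ->
  ftype src tgt x =
  [ffun m => [set B | spanning_tree src tgt B && (m == mB (i1 :: rest) i1 B)]].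
Proof.
move=> dl0 us Hb Hc Hd; apply/ffunP => m; rewrite !ffunE; apply/setP => B.
rewrite !inE; congr (_ && _).
apply: sector_of_strict => i ni.
have := @argmin_strict R n x i1 rest dl dl0 us Hb Hc Hd B i ni; lra.
Qed.

Lemma count_formula (T : finType) n (src tgt : 'I_n -> T) (i1 : 'I_n) rest :
  uniq (i1 :: rest) ->
  [ffun m => #|[set B | spanning_tree src tgt B && (m == mB (i1 :: rest) i1 B)]|]
  = coarse_formula src tgt (i1 :: rest).
Proof.
set s := i1 :: rest => us.
have Ds : forall (l : seq 'I_n) (B : {set 'I_n}),
    [disjoint [set x in l] & B] = ~~ has (fun a => a \in B) l.
  move=> l B; rewrite -disjoint_has; apply: eq_disjoint => x; by rewrite inE.
have i1s : i1 \in s by rewrite inE eqxx.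
have mBs : forall B, mB s i1 B \in s.
  move=> B; rewrite /mB; case: (ltnP (find (fun a => a \in B) s) (size s)) => H.
    exact: mem_nth.
  by rewrite nth_default.
apply/ffunP => m; rewrite !ffunE /=.
case: (eqVneq m i1) => [->|nm].
  rewrite /bIJ.
  set A1 := [set B : {set 'I_n} | _ & ([set i1] \subset B) && _].
  set A2 := [set B : {set 'I_n} | _ & (set0 \subset B) && _].
  have -> : (#|A1| + #|A2|)%R = (#|A1| + #|A2|)%N by [].
  rewrite -cardsUI.
  have -> : A1 :&: A2 = set0.
    apply/setP => B; rewrite !inE sub1set sub0set /=.
    apply/negP => /and3P [/and3P [_ iB _] _ H].
    by move: H; rewrite Ds => /hasP []; exists i1.
  rewrite cards0 addn0; apply: eq_card => B.
  rewrite !inE sub1set sub0set -setI_eq0 set0I eqxx /=.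
  case: (spanning_tree _ _ B) => //=.
  rewrite Ds.
  rewrite /mB /s /=.
  case iB: (i1 \in B) => /=; first by rewrite eqxx.
  case: (ltnP (find (fun a => a \in B) rest) (size rest)) => H.
    rewrite -has_find in H; rewrite H /=.
    apply/negP => /eqP E.
    have := mem_nth i1 (n := find (fun a => a \in B) rest) (s := rest).
    rewrite -has_find H -E => /(_ isT) i1r.
    by move: us => /= /andP [/negP].
  have HH : find (fun a => a \in B) rest = size rest by apply/eqP; rewrite eqn_leq H find_size.
  by rewrite nth_default ?HH // eqxx has_find HH ltnn.
case ms: (m \in s); last first.
  apply/eqP; rewrite cards_eq0; apply/eqP/setP => B; rewrite !inE.
  apply/negP => /andP [_ /eqP E]; by move: (mBs B); rewrite -E ms.
have Ei : index m s = (index m rest).+1 by rewrite /s /= eq_sym (negbTE nm).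
rewrite -Ei.
rewrite /bIJ; apply: eq_card => B; rewrite !inE sub1set.
case: (spanning_tree _ _ B) => //=.
rewrite Ds (eq_sym i1 m) (negbTE nm) -Ei -(@find_index_eq _ (fun a => a \in B)) //.
rewrite /mB; apply/eqP/eqP => [E|E].
  case: (ltnP (find (fun a => a \in B) s) (size s)) => H.
    by rewrite E index_uniq.
  by move: E; rewrite nth_default // => E; rewrite E eqxx in nm.
by rewrite E nth_index.
Qed.

Lemma disjoint_seq n (l : seq 'I_n) (B : {set 'I_n}) :
  [disjoint [set x in l] & B] = ~~ has (fun a => a \in B) l.
Proof. rewrite -disjoint_has; apply: eq_disjoint => x; by rewrite inE. Qed.

Lemma cf_eq (T : finType) n (src tgt : 'I_n -> T) s i1 rest j :
  s = i1 :: rest ->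
  coarse_formula src tgt s j =
  if j == i1 then (bIJ src tgt [set i1] set0 + bIJ src tgt set0 [set x in s])%N
  else if j \in s then bIJ src tgt [set j] [set x in take (index j s) s]
  else 0%N.
Proof. by move=> ->; rewrite ffunE. Qed.

Lemma bIJ0 (T : finType) n (src tgt : 'I_n -> T) (p : seq 'I_n) (I J : {set 'I_n}) :
  ~~ [exists B, spanning_tree src tgt B && [disjoint [set x in p] & B]] ->
  [set x in p] \subset J -> bIJ src tgt I J = 0%N.
Proof.
move=> NE sub; apply/eqP; rewrite cards_eq0; apply/eqP/setP => B; rewrite !inE.
apply/negP => /and3P [stB _ dJ]; move/negP: NE; apply; apply/existsP; exists B.
by rewrite stB (disjointWl sub dJ).
Qed.

Lemma formula_rcons (T : finType) n (src tgt : 'I_n -> T) (p : seq 'I_n) z :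
  uniq (rcons p z) -> p != [::] ->
  ~~ [exists B, spanning_tree src tgt B && [disjoint [set x in p] & B]] ->
  coarse_formula src tgt (rcons p z) = coarse_formula src tgt p.
Proof.
case: p => [//|i1 p'] U _ NE; set p := i1 :: p'.
have zp : z \notin p by move: U; rewrite rcons_uniq => /andP [].
apply/ffunP => j.
rewrite (@cf_eq _ _ _ _ (rcons p z) i1 (rcons p' z)) //.
rewrite (@cf_eq _ _ _ _ p i1 p') //.
case: (eqVneq j i1) => [_|nj].
  rewrite (@bIJ0 _ _ _ _ p set0 [set x in rcons p z]) //; last first.
    apply/subsetP => a; rewrite !inE mem_rcons inE; by case/orP => ->; rewrite ?orbT.
  by rewrite (@bIJ0 _ _ _ _ p set0 [set x in p]).
rewrite mem_rcons inE.
case jp: (j \in p).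
  rewrite orbT -cats1 index_cat jp takel_cat //; exact: index_size.
rewrite orbF; case: (eqVneq j z) => [->|//].
rewrite -cats1 index_cat (negbTE zp) /= eqxx addn0 take_size_cat //.
exact: (@bIJ0 _ _ _ _ _ _ _ NE (subxx _)).
Qed.

Lemma trunc (T : finType) n (src tgt : 'I_n -> T) (s : seq 'I_n) :
  uniq s -> s != [::] -> (exists B, spanning_tree src tgt B) ->
  exists s', [/\ (0 < size s')%N, uniq s',
    (exists2 B, spanning_tree src tgt B &
        [disjoint [set x in take (size s').-1 s'] & B])
    & coarse_formula src tgt s = coarse_formula src tgt s'].
Proof.
move=> + + [B0 HB0].
elim/last_ind: s => [//|p z IH] U _.
case: (eqVneq p [::]) => [->|pn].
  exists [:: z]; split => //; exists B0 => //.
  by rewrite /= disjoint_seq.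
have Up : uniq p by move: U; rewrite rcons_uniq => /andP [].
case EX: [exists B, spanning_tree src tgt B && [disjoint [set x in p] & B]].
  exists (rcons p z); split => //; first by rewrite size_rcons.
  move/existsP: EX => [B /andP [stB dB]]; exists B => //.
  by rewrite size_rcons /= -cats1 take_size_cat.
rewrite formula_rcons //; last by rewrite EX.
exact: IH.
Qed.

Lemma exists_small (R : realType) (F : finType) (f : F -> R) :
  (forall p, 0 < f p) -> exists2 e : R, 0 < e & forall p, e < f p.
Proof.
move=> Hf.
suff : forall l : seq F, exists2 e : R, 0 < e & forall p, p \in l -> e < f p.
  by case/(_ (enum F)) => e e0 He; exists e => // p; apply: He; rewrite mem_enum.
elim => [|a l [e e0 He]]; first by exists 1.
exists (Num.min e (f a / 2)).
  by rewrite lt_min e0 /=; have := Hf a; lra.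
move=> p; rewrite inE => /orP [/eqP ->|pl].
  rewrite gt_min; apply/orP; right; have := Hf a; lra.
rewrite gt_min; apply/orP; left; exact: He.
Qed.

Lemma add_ne0 (R : realType) (a D : R) :
  (a = 0 -> D != 0) -> (a != 0 -> `|D| < `|a|) -> a + D != 0.
Proof.
move=> H1 H2; case: (eqVneq a 0) => [a0|an].
  by rewrite a0 add0r; exact: H1.
apply/eqP => E; have : D = - a by apply/eqP; rewrite -subr_eq0 opprK addrC E.
move=> HD; have := H2 an; by rewrite HD normrN ltxx.
Qed.

Lemma perturb (R : realType) n (x : 'I_n -> R) (eps : R) : 0 < eps ->
  exists x' : 'I_n -> R, (forall i, `|x' i - x i| < eps) /\
    (forall i j, i != j -> x' i - x' j != 0 /\ x' i - x' j - 1 != 0).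
Proof.
move=> e0.
pose g (a : R) := if a == 0 then 1 else `|a|.
have g0 : forall a, 0 < g a.
  by move=> a; rewrite /g; case: (eqVneq a 0) => [//|an]; rewrite normr_gt0.
have [e1 e10 He1] := @exists_small R ('I_n * 'I_n)%type
  (fun p => Num.min (g (x p.1 - x p.2)) (Num.min (g (x p.1 - x p.2 - 1)) eps))
  (fun p => ltac:(by rewrite !lt_min !g0 e0)).
pose eta := e1 / (n%:R + 1).
have n1 : 0 < (n%:R + 1 : R) by rewrite ltr_wpDl.
have eta0 : 0 < eta by rewrite divr_gt0.
have etan : eta * n%:R < e1.
  rewrite /eta mulrAC ltr_pdivrMr // ltr_pM2l //; lra.
have Dbound : forall i j : 'I_n, `|eta * (i%:R - j%:R)| < e1.
  move=> i j; rewrite normrM (gtr0_norm eta0).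
  apply: le_lt_trans etan; rewrite ler_pM2l //.
  have hi : (i%:R : R) <= n%:R by rewrite ler_nat ltnW.
  have hj : (j%:R : R) <= n%:R by rewrite ler_nat ltnW.
  have hi0 : (0 : R) <= i%:R by [].
  have hj0 : (0 : R) <= j%:R by [].
  rewrite ler_norml; apply/andP; split; lra.
have Dne : forall i j : 'I_n, i != j -> eta * (i%:R - j%:R) != 0.
  move=> i j ij; rewrite mulf_eq0 negb_or (gt_eqF eta0) /= subr_eq0 eqr_nat.
  exact: ij.
exists (fun i => x i + eta * i%:R); split.
  move=> i; rewrite addrC addKr.
  have := He1 (i, i); rewrite !lt_min => /and3P [_ _ h].
  rewrite normrM (gtr0_norm eta0) ger0_norm //.
  have hi : (i%:R : R) <= n%:R by rewrite ler_nat ltnW.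
  apply: (le_lt_trans _ (lt_trans etan h)); rewrite ler_pM2l //.
move=> i j ij.
have E : x i + eta * i%:R - (x j + eta * j%:R) = (x i - x j) + eta * (i%:R - j%:R).
  by rewrite mulrBr; lra.
have := He1 (i, j); rewrite !lt_min /= => /and3P [h1 h2 _].
have Db := Dbound i j; have Dn := Dne i j ij.
split.
  rewrite E; apply: add_ne0 => [_ //|an].
  apply: (lt_trans Db); move: h1; by rewrite /g (negbTE an).
have -> : x i + eta * i%:R - (x j + eta * j%:R) - 1 = (x i - x j - 1) + eta * (i%:R - j%:R).
  by rewrite mulrBr; lra.
apply: add_ne0 => [_ //|an].
apply: (lt_trans Db); move: h2; by rewrite /g (negbTE an).
Qed.

Theorem mainTheorem1 (R : realType) (T : finType) (d k : nat)
    (src tgt : 'I_d.+1 -> T) :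
  simple_graph src tgt ->
  graph_connected src tgt ->
  bridgeless src tgt ->
  (forall B : {set 'I_d.+1}, spanning_tree src tgt B -> #|B| = k) ->
  forall t : {ffun 'I_d.+1 -> nat},
    (exists2 x : 'I_d.+1 -> R, in_maximal_cell src tgt x & ctype src tgt x = t)
    <->
    (exists (d' : nat) (s : seq 'I_d.+1),
       [/\ (d' <= d.+1 - k)%N, size s = d'.+1, uniq s,
           (exists2 B : {set 'I_d.+1}, spanning_tree src tgt B &
              [disjoint [set x in take d' s] & B])
         & t = coarse_formula src tgt s]).
Proof.
move=> _ Hconn _ Hk t; split.
- case=> x [eps e0 Hmax] <-.
  have [x' [Hnear Hgen]] := @perturb R _ x eps e0.
  have Ef : ftype src tgt x' = ftype src tgt x := Hmax x' Hnear.
  have -> : ctype src tgt x = ctype src tgt x'.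
    by rewrite /ctype Ef.
  pose le := fun a b : 'I_d.+1 => - x' a <= - x' b.
  pose s0 := sort le (enum 'I_d.+1).
  have Hs0 : sorted le s0 by apply: sort_sorted => a b; apply: le_total.
  have Ps0 : pairwise le s0.
    by rewrite -sorted_pairwise // => b a c; apply: le_trans.
  have Ms0 : forall i, i \in s0 by move=> i; rewrite mem_sort mem_enum.
  have Us0 : uniq s0 by rewrite sort_uniq enum_uniq.
  case Es0: s0 => [|i1 r]; first by move: (Ms0 ord0); rewrite Es0.
  rewrite Es0 in Ps0 Us0 Ms0.
  pose P := fun j => - x' j < - x' i1 + 1.
  have Es : filter P (i1 :: r) = i1 :: filter P r.
    by rewrite /= /P ifT //; lra.
  have Us : uniq (filter P (i1 :: r)) := filter_uniq _ Us0.
  have Ps : pairwise le (filter P (i1 :: r)) := pairwise_filter _ Ps0.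
  rewrite Es in Us Ps.
  have Hb : forall a b, a \in i1 :: filter P r -> b \in i1 :: filter P r ->
     (index a (i1 :: filter P r) < index b (i1 :: filter P r))%N ->
     - x' a + 0 < - x' b.
    move=> a b as_ bs ilt; have := @pairwise_index _ _ _ a b Ps as_ bs ilt; rewrite /le => H.
    have ab : a != b by apply/eqP => E; rewrite E ltnn in ilt.
    have [h1 _] := Hgen a b ab.
    rewrite addr0 lt_neqAle H andbT eqr_opp; by rewrite -subr_eq0.
  have Hc : forall i, i \notin i1 :: filter P r -> - x' i1 + 1 + 0 < - x' i.
    move=> i ins.
    have Pi : ~~ P i by move: ins; rewrite -Es mem_filter Ms0 andbT.
    have ni : i1 != i by apply/eqP => E; move: ins; rewrite -E inE eqxx.
    have [_ h2] := Hgen i1 i ni.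
    move: Pi; rewrite /P -/i1 -leNgt => H.
    rewrite addr0 lt_neqAle H andbT; apply: contra h2 => /eqP E; apply/eqP; lra.
  have Hd : forall i, i \in i1 :: filter P r -> - x' i + 0 < - x' i1 + 1.
    move=> i; rewrite -Es mem_filter => /andP [Pi _]; rewrite addr0; exact: Pi.
  have Ct : ctype src tgt x' = coarse_formula src tgt (i1 :: filter P r).
    rewrite -(@count_formula T _ src tgt) // /ctype (@ftype_char R T _ src tgt x' i1 (filter P r) 0 (lexx 0) Us Hb Hc Hd).
    by apply/ffunP => m; rewrite !ffunE.
  have [B0 HB0] := @exists_tree T _ src tgt Hconn.
  have [s' [sz U' [B stB dB] Ef']] :=
    @trunc T _ src tgt _ Us isT (ex_intro _ B0 HB0).
  exists (size s').-1, s'; split => //; last by rewrite Ct Ef'.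
    have cA : #|[set x in take (size s').-1 s']| = (size s').-1.
      rewrite cardsE; move/card_uniqP: (take_uniq (size s').-1 U') => ->.
      by rewrite size_take ifT // prednK.
    have := cardsUI [set x in take (size s').-1 s'] B.
    rewrite (disjoint_setI0 dB) cards0 addn0 (Hk _ stB) cA.
    have := subset_leq_card (subsetT ([set x in take (size s').-1 s'] :|: B)); rewrite cardsT card_ord.
    lia.
    by rewrite prednK.
  by exists B.
- case=> d' [s [Hd' Hsz Us [B stB dB] ->]].
  case: s Hsz Us dB => [//|i1 rest] Hsz Us dB.
  set s := i1 :: rest.
  have N1 : (1 : R) <= (size s)%:R by rewrite ler1n.
  pose u : R := ((size s)%:R)^-1.
  have Nu : (size s)%:R * u = 1 by rewrite /u mulfV // gt_eqF //; lra.
  have u0 : 0 < u by rewrite /u invr_gt0; lra.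
  pose y i : R := if i \in s then (index i s)%:R * u else 2.
  pose x i := - y i.
  have dl0 : 0 <= u / 2 by lra.
  have Hb : forall a b, a \in s -> b \in s -> (index a s < index b s)%N ->
     - x a + u / 2 < - x b.
    move=> a b as_ bs ilt; rewrite /x /y !opprK as_ bs.
    have : ((index a s)%:R + 1 : R) <= (index b s)%:R by rewrite natr1 ler_nat.
    move=> h; nra.
  have y1 : y i1 = 0 by rewrite /y inE eqxx /= eqxx mul0r.
  have Hc : forall i, i \notin s -> - x i1 + 1 + u / 2 < - x i.
    move=> i ins; rewrite /x !opprK y1 /y (negbTE ins); nra.
  have Hd : forall i, i \in s -> - x i + u / 2 < - x i1 + 1.
    move=> i is_; rewrite /x !opprK y1 /y is_.
    have : ((index i s)%:R + 1 : R) <= (size s)%:R.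
      by rewrite natr1 ler_nat index_mem.
    move=> h; nra.
  exists x.
    apply: (@maximal_of_margin _ _ _ _ _ x (u / 2) (mB s i1)); first lra.
    move=> B' i ni; exact: (@argmin_strict R _ x i1 rest (u / 2) dl0 Us Hb Hc Hd B' i ni).
  rewrite -(@count_formula T _ src tgt) // /ctype (@ftype_char R T _ src tgt x i1 rest (u / 2) dl0 Us Hb Hc Hd).
  by apply/ffunP => m; rewrite !ffunE.
Qed.
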